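(* For every integer $n\ge 2$ and every $s\in\mathbb{N}$, $\mathrm{ML}(1,2,\ldots,n-1,ns)=\frac{s}{ns+1}$.
   Context: For a real number $x$, $\Vert x\Vert$ denotes the distance from $x$ to the nearest integer. For positive integers $v_1,\ldots,v_n$, the maximum loneliness is $\mathrm{ML}(v_1,\ldots,v_n)=\max_{t\in\mathbb{R}}\min_{1\le i\le n}\Vert t v_i\Vert$. Here $\mathbb{N}=\{1,2,3,\ldots\}$. *)

(* Defs.v *)
From Stdlib Require Import Reals List.
Open Scope R_scope.

(* ||x|| : distance from x to the nearest integer.
   Int_part x = up x - 1 is the floor of x. *)
Definition dist_nint (x : R) : R :=
  let f := x - IZR (Int_part x) in Rmin f (1 - f).

Definition min_loneliness (t : R) (v0 : nat) (rest : list nat) : R :=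
  fold_left (fun acc v => Rmin acc (dist_nint (t * INR v))) rest
            (dist_nint (t * INR v0)).

Definition is_ML (v0 : nat) (rest : list nat) (m : R) : Prop :=
  (exists t : R, min_loneliness t v0 rest = m) /\
  (forall t : R, min_loneliness t v0 rest <= m).

(* The speed list 1, 2, ..., n-1, n*s  (written as 1 :: (2..n-1 ++ [n*s])) *)
Definition speeds_tail (n s : nat) : list nat :=
  seq 2 (n - 2) ++ (n * s)%nat :: nil.

(* Main.v *)
Require Import Defs.
From Stdlib Require Import Reals List Lra Lia ZArith Classical.
Open Scope R_scope.

Lemma frac_bounds z : 0 <= z - IZR (Int_part z) < 1.
Proof. destruct (base_Int_part z); lra. Qed.

Lemma D1 z m : dist_nint z <= Rabs (z - IZR m).
Proof.
  unfold dist_nint. pose proof (base_Int_part z) as [H1 H2].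
  set (p := Int_part z) in *.
  destruct (Z_le_gt_dec m p) as [Hm|Hm].
  - apply IZR_le in Hm. rewrite Rabs_right by lra.
    apply Rle_trans with (z - IZR p); [apply Rmin_l|lra].
  - assert (IZR m >= IZR p + 1) by (rewrite <- plus_IZR; apply Rle_ge, IZR_le; lia).
    rewrite Rabs_left1 by lra.
    apply Rle_trans with (1 - (z - IZR p)); [apply Rmin_r|lra].
Qed.

Lemma D2 z : exists m, dist_nint z = Rabs (z - IZR m).
Proof.
  unfold dist_nint. pose proof (frac_bounds z).
  set (p := Int_part z) in *.
  destruct (Rle_dec (z - IZR p) (1 - (z - IZR p))).
  - exists p. rewrite Rmin_left by lra. rewrite Rabs_right; lra.
  - exists (p+1)%Z. rewrite Rmin_right by lra. rewrite plus_IZR, Rabs_left1; lra.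
Qed.

Lemma D_lb z c : (forall m, c <= Rabs (z - IZR m)) -> c <= dist_nint z.
Proof. intros H. destruct (D2 z) as [m ->]. apply H. Qed.

Lemma dist_frac_lo z : dist_nint z <= z - IZR (Int_part z).
Proof. unfold dist_nint; apply Rmin_l. Qed.
Lemma dist_frac_hi z : dist_nint z <= 1 - (z - IZR (Int_part z)).
Proof. unfold dist_nint; apply Rmin_r. Qed.

Lemma dist_mul z (s : nat) : dist_nint (INR s * z) <= INR s * dist_nint z.
Proof.
  destruct (D2 z) as [m ->].
  eapply Rle_trans. apply (D1 _ (Z.of_nat s * m)).
  rewrite mult_IZR, <- INR_IZR_INZ.
  replace (INR s * z - INR s * IZR m) with (INR s * (z - IZR m)) by ring.
  rewrite Rabs_mult, Rabs_right. lra. apply Rle_ge, pos_INR.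
Qed.

Lemma pack (f : nat -> R) (d : R) : 0 <= d -> forall m (I : list nat) a b,
  NoDup I -> length I = S m -> (forall i, In i I -> a < f i < b) ->
  (forall i j, In i I -> In j I -> i <> j -> Rabs (f i - f j) > d) ->
  b - a > INR m * d.
Proof.
  intros Hd m. induction m as [|m IH]; intros I a b ND HL Hin Hp.
  - destruct I as [|i I]; [discriminate|]. specialize (Hin i (or_introl eq_refl)). simpl; lra.
  - assert (Hmax : exists i0, In i0 I /\ forall j, In j I -> f j <= f i0).
    { destruct I as [|i I]; [discriminate|]. clear -i.
      revert i. induction I as [|k I IHI]; intros i.
      - exists i. split; [left; auto|]. intros j [<-|[]]; lra.
      - destruct (IHI k) as [i1 [H1 H2]].
        destruct (Rle_dec (f i) (f i1)).
        + exists i1. split. { destruct H1 as [<-|H1]; [right; left; auto|right; right; auto]. }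
          intros j [<-|Hj]; [lra|]. apply H2; exact Hj.
        + exists i. split; [left; auto|]. intros j [<-|Hj]; [lra|].
          specialize (H2 j Hj); lra. }
    destruct Hmax as [i0 [Hi0 Hmx]].
    destruct (in_split _ _ Hi0) as [l1 [l2 ->]].
    pose proof (NoDup_remove_1 _ _ _ ND) as ND'.
    pose proof (NoDup_remove_2 _ _ _ ND) as Nin.
    assert (Hsub : forall j, In j (l1 ++ l2) -> In j (l1 ++ i0 :: l2) /\ j <> i0).
    { intros j Hj. split.
      - apply in_app_or in Hj. apply in_or_app. destruct Hj; [left|right; right]; auto.
      - intros ->. contradiction. }
    assert (HL' : length (l1 ++ l2) = S m).
    { rewrite length_app in *. simpl in HL. lia. }
    pose proof (Hin i0 Hi0) as Hb.
    assert (IH' := IH (l1 ++ l2) a (f i0 - d) ND' HL').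
    assert (f i0 - d - a > INR m * d).
    { apply IH'.
      - intros i Hi. destruct (Hsub i Hi) as [H1 H2].
        split; [apply Hin; auto|].
        pose proof (Hmx i H1) as H3. pose proof (Hp i i0 H1 Hi0 H2) as H4.
        rewrite Rabs_left1 in H4 by lra. lra.
      - intros i j Hi Hj. apply Hp; [apply Hsub; auto|apply Hsub; auto]. }
    rewrite S_INR. lra.
Qed.

Section F.
Variable t : R.
Let F := fun acc v => Rmin acc (dist_nint (t * INR v)).
Lemma fold_le_init l a : fold_left F l a <= a.
Proof. revert a; induction l as [|v l IH]; intros a; simpl; [lra|].
  eapply Rle_trans; [apply IH|]. unfold F; apply Rmin_l. Qed.
Lemma fold_le_mem l a v : In v l -> fold_left F l a <= dist_nint (t * INR v).
Proof. revert a; induction l as [|w l IH]; intros a Hv; simpl; [destruct Hv|].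
  destruct Hv as [<-|Hv]; [|apply IH; auto].
  eapply Rle_trans; [apply fold_le_init|]. unfold F; apply Rmin_r. Qed.
Lemma fold_ge l a c : c <= a -> (forall v, In v l -> c <= dist_nint (t * INR v)) ->
  c <= fold_left F l a.
Proof. revert a; induction l as [|w l IH]; intros a Ha Hl; simpl; [lra|].
  apply IH; [|intros; apply Hl; right; auto].
  unfold F. apply Rmin_glb; auto. apply Hl; left; auto. Qed.
End F.

Lemma key (n : nat) (d e t : R) : (2 <= n)%nat -> 0 < e <= d -> d < 1/2 ->
  INR n * d + e = 1 ->
  (forall k, (1 <= k <= n - 1)%nat -> dist_nint (t * INR k) > d) ->
  dist_nint (t * INR n) <= e.
Proof.
  intros Hn He Hd Hsum Hk.
  destruct (Rle_dec (dist_nint (t * INR n)) e) as [|Hne]; [auto|exfalso].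
  set (f := fun k : nat => t * INR k - IZR (Int_part (t * INR k))).
  assert (Hpair : forall i j, In i (seq 1 n) -> In j (seq 1 n) -> i <> j -> Rabs (f i - f j) > d).
  { assert (G : forall i j, In i (seq 1 n) -> In j (seq 1 n) -> (j < i)%nat -> Rabs (f i - f j) > d).
    { intros i j Hi Hj Hij. apply in_seq in Hi, Hj.
      assert (Hk' := Hk (i - j)%nat ltac:(lia)).
      pose proof (D1 (t * INR (i - j)) (Int_part (t * INR i) - Int_part (t * INR j))) as H.
      unfold f. rewrite minus_IZR, minus_INR in H by lia.
      replace (t * (INR i - INR j) - (IZR (Int_part (t * INR i)) - IZR (Int_part (t * INR j))))
        with (t * INR i - IZR (Int_part (t * INR i)) - (t * INR j - IZR (Int_part (t * INR j)))) in H by ring.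
      rewrite minus_INR in Hk' by lia. lra. }
    intros i j Hi Hj Hij. assert (Hc : (i < j \/ j < i)%nat) by lia. destruct Hc.
    - rewrite Rabs_minus_sym. apply G; auto.
    - apply G; auto. }
  assert (Hb : forall k, (1 <= k <= n - 1)%nat -> d < f k < 1 - d).
  { intros k Hk1. pose proof (Hk k Hk1). pose proof (dist_frac_lo (t * INR k)).
    pose proof (dist_frac_hi (t * INR k)). unfold f; lra. }
  assert (Hyb : e < f n < 1 - e).
  { pose proof (dist_frac_lo (t * INR n)). pose proof (dist_frac_hi (t * INR n)). unfold f; lra. }
  assert (HL : length (seq 1 n) = S (n - 1)) by (rewrite length_seq; lia).
  assert (Hnd := seq_NoDup n 1).
  assert (HdP : 0 <= d) by lra.
  assert (Hnm : INR (n - 1) = INR n - 1) by (rewrite minus_INR by lia; simpl; ring).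
  destruct (Rlt_dec (f n) (1/2)).
  - assert (X := pack f d HdP (n-1) (seq 1 n) e (1 - d) Hnd HL).
    assert (1 - d - e > INR (n - 1) * d).
    { apply X; auto. intros i Hi. apply in_seq in Hi.
      destruct (Nat.eq_dec i n) as [->|]; [lra|]. pose proof (Hb i ltac:(lia)). lra. }
    rewrite Hnm in H. lra.
  - assert (X := pack f d HdP (n-1) (seq 1 n) d (1 - e) Hnd HL).
    assert (1 - e - d > INR (n - 1) * d).
    { apply X; auto. intros i Hi. apply in_seq in Hi.
      destruct (Nat.eq_dec i n) as [->|]; [lra|]. pose proof (Hb i ltac:(lia)). lra. }
    rewrite Hnm in H. lra.
Qed.

Theorem theorem5p1 (n s : nat) (hn : (2 <= n)%nat) (hs : (1 <= s)%nat) :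
  is_ML 1 (speeds_tail n s) (INR s / (INR n * INR s + 1)).
Proof.
  set (N := INR n). set (S := INR s).
  assert (HN : 2 <= N) by (apply (le_INR 2); auto).
  assert (HS : 1 <= S) by (apply (le_INR 1); auto).
  assert (HP : 0 < N * S + 1) by nra.
  set (d := S / (N * S + 1)). set (e := 1 / (N * S + 1)).
  assert (Hsum : N * d + e = 1) by (unfold d, e; field; lra).
  assert (He : 0 < e) by (unfold e; apply Rdiv_lt_0_compat; lra).
  assert (Hed : e <= d) by (unfold d, e; apply Rmult_le_compat_r; [left; apply Rinv_0_lt_compat|]; lra).
  assert (Hd2 : d < 1/2) by (unfold d; apply Rmult_lt_reg_r with (N * S + 1); [lra|];
     unfold Rdiv; rewrite Rmult_assoc, Rinv_l by lra; nra).
  assert (HdS : d * (N * S) = S - d) by (unfold d; field; lra).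
  split.
  - exists d. unfold min_loneliness. apply Rle_antisym.
    + eapply Rle_trans; [apply fold_le_init|]. simpl INR. rewrite Rmult_1_r.
      eapply Rle_trans; [apply (D1 _ 0)|]. rewrite Rminus_0_r, Rabs_right; lra.
    + apply fold_ge.
      * simpl INR. rewrite Rmult_1_r. apply D_lb. intros m.
        destruct (Z_le_gt_dec m 0) as [Hm|Hm].
        -- apply IZR_le in Hm. rewrite Rabs_right; lra.
        -- assert (1 <= IZR m) by (apply IZR_le; lia). rewrite Rabs_left1; lra.
      * intros v Hv. unfold speeds_tail in Hv. apply in_app_or in Hv. destruct Hv as [Hv|[Hv|[]]].
        -- apply in_seq in Hv. assert (H2 : 2 <= INR v) by (apply (le_INR 2); lia).
           assert (H3 : INR v <= N - 1) by (unfold N; replace (INR n - 1) with (INR (n-1)) by (rewrite minus_INR by lia; simpl; ring); apply le_INR; lia).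
           apply D_lb. intros m.
           destruct (Z_le_gt_dec m 0) as [Hm|Hm].
           ++ apply IZR_le in Hm. rewrite Rabs_right; nra.
           ++ assert (1 <= IZR m) by (apply IZR_le; lia). rewrite Rabs_left1; nra.
        -- subst v. rewrite mult_INR. fold N S. rewrite HdS. apply D_lb. intros m.
           assert (HSZ : S = IZR (Z.of_nat s)) by (unfold S; apply INR_IZR_INZ).
           destruct (Z_le_gt_dec m (Z.of_nat s - 1)) as [Hm|Hm].
           ++ apply IZR_le in Hm. rewrite minus_IZR, <- HSZ in Hm. rewrite Rabs_right; lra.
           ++ assert (IZR (Z.of_nat s) <= IZR m) by (apply IZR_le; lia). rewrite <- HSZ in *. rewrite Rabs_left1; lra.
  - intros t. unfold min_loneliness.
    destruct (classic (exists k, (1 <= k <= n - 1)%nat /\ dist_nint (t * INR k) <= d)) as [[k [Hk Hkd]]|Hno].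
    + destruct (Nat.eq_dec k 1) as [->|Hk1].
      * eapply Rle_trans; [apply fold_le_init|]. exact Hkd.
      * eapply Rle_trans; [apply fold_le_mem|exact Hkd].
        unfold speeds_tail. apply in_or_app. left. apply in_seq. lia.
    + assert (Hk : forall k, (1 <= k <= n - 1)%nat -> dist_nint (t * INR k) > d).
      { intros k Hk. apply Rnot_le_gt. intros H. apply Hno. exists k; auto. }
      pose proof (key n d e t hn (conj He Hed) Hd2 Hsum Hk) as Hkey.
      eapply Rle_trans; [apply fold_le_mem with (v := (n * s)%nat)|].
      * unfold speeds_tail. apply in_or_app. right. left. auto.
      * rewrite mult_INR. replace (t * (INR n * INR s)) with (INR s * (t * INR n)) by ring.
        eapply Rle_trans; [apply dist_mul|]. fold S.
        apply Rle_trans with (S * e); [apply Rmult_le_compat_l; lra|].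
        unfold e, d. lra.
Qed.
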